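(* In the setting of the context, assume $G_{xy}^{[1]}=1$, $G_x/G_x^{[1]}\cong S_5$ and $G_x^{[1]}\cong S_4$. Then $G_x\cong S_5\times S_4$ and $G_e\cong S_4\wr C_2$.
   Context: $\mathcal{A}=(G_x,G_e,G_{xy})$ is a finite, primitive amalgam of degree $(5,2)$ (no nontrivial subgroup of $G_{xy}$ normal in both $G_x$ and $G_e$; $|G_x:G_{xy}|=5$, $|G_e:G_{xy}|=2$), $G=G_x*_{G_{xy}}G_e$ acts on the coset graph (5-valent tree) $\Gamma$, $x$ is the vertex with stabiliser $G_x$, $y$ the neighbour with $G_e$ the setwise stabiliser of $\{x,y\}$ and $G_x\cap G_y=G_{xy}$. $G_z^{[1]}$ is the pointwise stabiliser of $z$ and its neighbours, $G_{xy}^{[1]}=G_x^{[1]}\cap G_y^{[1]}$. *)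

(* Defs.v *)
From mathcomp Require Import all_boot all_fingroup.
Set Implicit Arguments. Unset Strict Implicit. Unset Printing Implicit Defensive.

Local Open Scope group_scope.

Definition amalgam_of_degree (gT : finGroupType) (Gx Ge Gxy : {group gT})
  (a b : nat) : Prop :=
  [/\ Gxy = Gx :&: Ge, #|Gx : Gxy| = a & #|Ge : Gxy| = b].

Definition primitive_amalgam (gT : finGroupType) (Gx Ge Gxy : {group gT}) : Prop :=
  forall K : {group gT}, K \subset Gxy -> K <| Gx -> K <| Ge -> K :=: 1.

(* G_z^{[1]}: kernel of the action of the vertex stabiliser Gz on the
   neighbours of z, which are the cosets of the edge stabiliser Gzw in Gz,
   i.e. the core of Gzw in Gz. *)
Definition vertex_kernel (gT : finGroupType) (Gz Gzw : {set gT}) : {set gT} :=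
  gcore Gzw Gz.

Definition Sym_n (n : nat) : {set 'S_n} := [set: 'S_n].

(* The wreath product S_4 wr C_2, realised (imprimitive permutation wreath
   product) as the stabiliser in S_8 of the block system {{0..3},{4..7}}. *)
Definition wr_block : {set 'I_8} := [set i : 'I_8 | i < 4].
Definition S4_wr_C2 : {set 'S_8} :=
  [set s : 'S_8 | (s @: wr_block == wr_block) || (s @: wr_block == ~: wr_block)].

(* Main.v *)
Require Import Defs.
From mathcomp Require Import all_boot all_fingroup.
From mathcomp Require Import center commutator zify.
Set Implicit Arguments. Unset Strict Implicit. Unset Printing Implicit Defensive.
Local Open Scope group_scope.

Lemma ex_third (j k : 'I_4) : exists l : 'I_4, (l != j) && (l != k).
Proof.
case: (boolP [exists l : 'I_4, (l != j) && (l != k)]) => [/existsP//|/existsPn H].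
have : #|[set: 'I_4]| <= #|[set j; k]|.
  apply: subset_leq_card; apply/subsetP => l _; have := H l.
  by rewrite !inE negb_and !negbK => /orP[] ->; rewrite ?orbT.
by rewrite cardsT card_ord cards2; case: (j != k).
Qed.

Lemma S4_central (s : 'S_4) : (forall u : 'S_4, commute s u) -> s = 1.
Proof.
move=> Hc; apply/permP => i; rewrite perm1.
have key : forall j, j != i -> (s i == i) || (s i == j).
  move=> j ji.
  have E : tperm (s i) (s j) = tperm i j.
    rewrite -tpermJ conjgE. 
    by rewrite -?mulgA -(Hc (tperm i j)) mulKg.
  apply/negPn/negP; rewrite negb_or => /andP[h1 h2].
  have := tpermL (s i) (s j); rewrite E tpermD ?(eq_sym i) ?(eq_sym j) //.
  by move/perm_inj/eqP; rewrite eq_sym (negPf ji).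
have [j /andP[ji _]] := ex_third i i.
have [l /andP[li lj]] := ex_third i j.
have := key j ji; have := key l li.
case/orP=> [/eqP//|/eqP->]; case/orP=> [/eqP h|/eqP h].
  by move: li; rewrite h eqxx.
by move: lj; rewrite h eqxx.
Qed.

Lemma center_S4 : 'Z([set: 'S_4]) = 1.
Proof.
apply/trivgP/subsetP => s /centerP[_ Hs]; rewrite inE; apply/eqP.
by apply: S4_central => u; apply: Hs; rewrite inE.
Qed.

Lemma gcore_conj (gT : finGroupType) (A G : {group gT}) (t : gT) :
  A :^ t = A -> gcore A (G :^ t) = gcore A G :^ t.
Proof.
move=> At; apply/eqP; rewrite eqEsubset; apply/andP; split.
  rewrite -sub_conjgV; apply: gcore_max.
    by rewrite sub_conjgV At (gcore_sub A (G :^ t)%G).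
  by rewrite normJ -sub_conjgV invgK gcore_norm.
have At' : A :^ t^-1 = A by rewrite -{1}At conjsgK.
apply: gcore_max; first by rewrite sub_conjg At' gcore_sub.
by rewrite normJ conjSg gcore_norm.
Qed.

Lemma prod5 (a b : nat) : (a * b = 5)%N -> a = 1%N \/ b = 1%N.
Proof.
move=> h; have : a %| 5 by rewrite -h dvdn_mulr.
case/primeP: (isT : prime 5) => _ /[apply] /orP[/eqP->|/eqP ha]; first by left.
by right; move: h; rewrite ha; lia.
Qed.
Lemma cB : #|wr_block| = 4.
Proof.
have le48 : 4 <= 8 by [].
have -> : wr_block = [set widen_ord le48 j | j : 'I_4].
  apply/setP=> i; rewrite !inE; apply/idP/imsetP => [lt4|[j _ ->]] /=; last exact: ltn_ord.
  by exists (Ordinal lt4) => //; apply/val_inj.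
by rewrite card_imset ?cardsT ?card_ord //; by move=> a b /(congr1 val) /= /val_inj.
Qed.
Lemma cCB : #|~: wr_block| = 4.
Proof. have := cardsC wr_block; rewrite cB card_ord. by move=> h; apply/eqP; rewrite -(eqn_add2l 4) h. Qed.

Lemma perm_imsetC (T : finType) (p : {perm T}) (A : {set T}) : p @: (~: A) = ~: (p @: A).
Proof.
apply/eqP; rewrite eqEcard; apply/andP; split.
  apply/subsetP => x /imsetP[y]; rewrite inE => yA ->; rewrite inE.
  apply/imsetP => [[z zA /perm_inj eyz]]; by move: yA; rewrite eyz zA.
rewrite card_imset; last exact: perm_inj.
by rewrite -(leq_add2l #|p @: A|) cardsC card_imset ?cardsC //; exact: perm_inj.
Qed.

Lemma imset_permM (T : finType) (s u : {perm T}) (A : {set T}) :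
  (s * u) @: A = u @: (s @: A).
Proof. by rewrite -imset_comp; apply: eq_imset => x; rewrite /= permM. Qed.

Lemma card_W0 : #|[set s : 'S_8 | s @: wr_block == wr_block]| <= 576.
Proof.
set B := wr_block.
set P := [set p : 'S_8 | perm_on B p]; set Q := [set q : 'S_8 | perm_on (~: B) q].
have sub : [set s : 'S_8 | s @: B == B] \subset
           [set (fun u : 'S_8 * 'S_8 => u.1 * u.2) x | x in setX Q P].
  apply/subsetP => s; rewrite inE => /eqP hs.
  have Ns : s \in 'N(B | 'P).
    rewrite !inE; apply/subsetP => x xB; rewrite inE /= -hs; exact: imset_f.
  set s1 := restr_perm B s.
  apply/imsetP; exists (s * s1^-1, s1); last by rewrite /= -mulgA mulVg mulg1.
  rewrite !inE /= restr_perm_on andbT.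
  apply/subsetP => x; rewrite !inE; apply: contraR; rewrite negbK => xB.
  have xB' : x \in B by rewrite /B /wr_block inE.
  by rewrite permM -(restr_permE Ns xB') permK.
apply: (leq_trans (subset_leq_card sub)); apply: (leq_trans (leq_imset_card _ _)).
by rewrite cardsX !cardsE !card_perm cCB cB.
Qed.

Lemma card_W : #|S4_wr_C2| <= 1152.
Proof.
have -> : S4_wr_C2 = [set s : 'S_8 | s @: wr_block == wr_block] :|:
                     [set s : 'S_8 | s @: wr_block == ~: wr_block].
  by apply/setP => s; rewrite !inE.
apply: (leq_trans (leq_card_setU _ _)).
have h0 := card_W0.
suff : #|[set s : 'S_8 | s @: wr_block == ~: wr_block]| <= 576.
  by move=> h1; apply: (leq_trans (leq_add h0 h1)).
case: (set_0Vmem [set s : 'S_8 | s @: wr_block == ~: wr_block]) => [->|[s0]].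
  by rewrite cards0.
rewrite inE => /eqP h0s.
apply: leq_trans h0.
rewrite -(card_imset _ (mulIg s0^-1)); apply: subset_leq_card.
apply/subsetP => x /imsetP[s]; rewrite inE => /eqP hs ->; rewrite inE imset_permM hs.
have e : s0^-1 @: (s0 @: wr_block) = wr_block.
  by rewrite -imset_permM mulgV (eq_imset _ (perm1 (T:='I_8))) imset_id.
by rewrite -{2}e h0s perm_imsetC.
Qed.

Lemma center_triv_of_S4 (gT : finGroupType) (K : {group gT}) :
  K \isog Sym_n 4 -> 'Z(K) = 1.
Proof.
case/isogP=> f injf imf; apply/eqP.
rewrite -(morphim_injm_eq1 injf) ?(subset_trans (center_sub K)) //.
by rewrite injm_center // imf /Sym_n center_S4.
Qed.

Lemma Gx_part (gT : finGroupType) (Gx Gxy K Ky : {group gT}) :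
  K <| Gx -> Gxy \subset Gx -> K * Ky = Gxy -> Ky \subset Gxy ->
  Ky <| Gxy -> K :&: Ky = 1 -> #|K| = 24 -> #|Gxy| = 576 ->
  #|Gx : Gxy| = 5 -> gcore Gxy Gx = K ->
  (Gx / K) \isog Sym_n 5 -> K \isog Sym_n 4 ->
  Gx \isog setX (Sym_n 5) (Sym_n 4).
Proof.
move=> nKGx sGxyGx defGxy sKyGxy nKyGxy tiKKy cK cGxy iGx coreK isoQ isoK.
have sKGxy : K \subset Gxy by rewrite -coreK gcore_sub.
have nKGxy : K <| Gxy := normalS sKGxy sGxyGx nKGx.
have cKKy : Ky \subset 'C(K).
  rewrite centsC; apply/commG1P/trivgP; rewrite -tiKKy.
  apply: commg_subI; rewrite subsetI subxx /=.
    exact: subset_trans sKGxy (normal_norm nKyGxy).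
  exact: subset_trans sKyGxy (normal_norm nKGxy).
set C := 'C_Gx(K).
have sKyC : Ky \subset C by rewrite subsetI (subset_trans sKyGxy sGxyGx).
have nCGx : C <| Gx.
  have := subcent_normal Gx K; rewrite (setIidPl (normal_norm nKGx)) //.
have nKC : K * C <| Gx by apply: normalM.
have sGxyKC : Gxy \subset K * C by rewrite -defGxy mulgS.
have sKCGx : K * C \subset Gx by apply: normal_sub.
have nKC' : C \subset 'N(K) by rewrite (subset_trans (normal_sub nCGx) (normal_norm nKGx)).
have defKC : K <*> C = Gx.
  have eKC := norm_joinEr nKC'.
  have s1 : K <*> C \subset Gx by rewrite eKC.
  have s2 : Gxy \subset K <*> C by rewrite eKC.
  have := Lagrange_index s1 s2.
  rewrite iGx => h; have [h1|h1] := prod5 h.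
    by rewrite (index1g s1 h1).
  have e := index1g s2 h1; exfalso.
  have : Gxy \subset K.
    rewrite -coreK; apply: gcore_max => //.
    by rewrite e /= (norm_joinEr nKC') (normal_norm nKC).
  by move/subset_leq_card; rewrite cGxy cK.
have tiKC : K :&: C = 1.
  by rewrite /C setIA (setIidPl (normal_sub nKGx)); apply: center_triv_of_S4.
have dp : K \x 'C_Gx(K)%G = Gx.
  by rewrite dprodE ?subsetIr // -(norm_joinEr nKC').
have isoC : 'C_Gx(K)%G \isog Sym_n 5 := isog_trans (sdprod_isog (dprodWsd dp)) isoQ.
have dp2 := setX_dprod [set: 'S_5]%G [set: 'S_4]%G.
rewrite /Sym_n in isoC isoK *.
have dp1 : 'C_Gx(K)%G \x K = Gx by rewrite dprodC.
apply: (isog_dprod dp1 dp2).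
  apply: (isog_trans isoC).
  have h := sub_isog (subsetT [set: 'S_5]) (@injm_pairg1 _ ('S_4 : finGroupType)).
  by rewrite morphim_pairg1 in h.
apply: (isog_trans isoK).
have h := sub_isog (subsetT [set: 'S_4]) (@injm_pair1g ('S_5 : finGroupType) _).
by rewrite morphim_pair1g in h.
Qed.

Lemma three_in (T : finType) (X : {set T}) (a b c : T) :
  #|X| <= 2 -> a \in X -> b \in X -> c \in X -> a != b -> a != c -> b = c.
Proof.
move=> cX aX bX cX' ab ac; apply/eqP; apply/negPn/negP => bc.
have : #|[set a; b; c]| <= #|X|.
  by apply: subset_leq_card; apply/subsetP => x; rewrite !inE => /orP[/orP[]|] /eqP->.
rewrite -setUA cardsU1 cards2 !inE negb_or ab ac bc /=.
by move/leq_trans/(_ cX).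
Qed.

Lemma coset_index2 (gT : finGroupType) (Ge Gxy : {group gT}) (t g : gT) :
  Gxy \subset Ge -> #|Ge : Gxy| = 2 -> t \in Ge -> t \notin Gxy ->
  g \in Ge -> g \notin Gxy -> g * t^-1 \in Gxy.
Proof.
move=> sGG iG tG tN gG gN.
have mem x : x \in Ge -> Gxy :* x \in rcosets Gxy Ge.
  by move=> xG; rewrite mem_rcosets (mulSGid sGG).
have neq x : x \notin Gxy -> Gxy :* 1 != Gxy :* x.
  move=> xN; apply: contra xN => /eqP e; by have := rcoset_refl Gxy x; rewrite -e rcoset1.
have e := three_in (X := rcosets Gxy Ge) _ (mem 1 (group1 _)) (mem g gG) (mem t tG) (neq g gN) (neq t tN).
rewrite -mem_rcoset -e ?rcoset_refl //.
by rewrite -[#|rcosets _ _|]/#|Ge : Gxy| iG.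
Qed.

Definition isl (u : 'I_4 + 'I_4) := if u is inl _ then true else false.

Lemma isl_split (i : 'I_8) : isl (@split 4 4 i) = (i < 4).
Proof. by case: (@splitP 4 4 i). Qed.

Lemma unsplit_lt (u : 'I_4 + 'I_4) : (@unsplit 4 4 u < 4) = isl u.
Proof. by case: u => j /=; rewrite ?ltn_ord // ltnNge leq_addr. Qed.

Lemma Ge_part (gT : finGroupType) (Ge Gxy K : {group gT}) (t : gT) :
  Gxy \subset Ge -> #|Ge : Gxy| = 2 -> t \in Ge :\: Gxy ->
  K * (K :^ t) = Gxy -> K :^ t \subset 'C(K) -> K :&: K :^ t = 1 ->
  #|Gxy| = 576 -> K \isog Sym_n 4 -> Ge \isog S4_wr_C2.
Proof.
move=> sGxyGe iGe /setDP[tGe tNGxy] defGxy cKKt tiK cGxy isoK.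
have nGxy : Gxy <| Ge := index2_normal sGxyGe iGe.
have nGt : t \in 'N(Gxy) := subsetP (normal_norm nGxy) t tGe.
have nGtV : t^-1 \in 'N(Gxy) by rewrite groupV.
have cosetP g : g \in Ge -> g \notin Gxy -> g * t^-1 \in Gxy.
  exact: coset_index2 sGxyGe iGe tGe tNGxy.
have tt : t * t \in Gxy.
  have := cosetP t^-1 (groupVr tGe); rewrite groupV => /(_ tNGxy).
  by rewrite -groupV invMg !invgK.
case/isogP: isoK => f injf imf.
have surjf (u : 'S_4) : exists2 k, k \in K & f k = u.
  have : u \in f @* K by rewrite imf inE.
  by case/morphimP => k _ kK ->; exists k.
pose S (j : 'I_4) := [set k in K | f k j == j].
have sSK j : S j \subset K by apply/subsetP => k; rewrite inE => /andP[].
have SJ a j : a \in K -> S j :^ a = S (f a j).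
  move=> aK; apply/setP => k; rewrite mem_conjg !inE groupJr ?groupV //.
  apply: andb_id2l => kK; rewrite morphJ ?groupV // morphV // conjgE invgK !permM.
  by rewrite -(inj_eq (@perm_inj _ (f a))) permKV.
have Sinj j k : S j = S k -> j = k.
  move=> e; apply/eqP; apply/negPn/negP => jk.
  have [l /andP[lj lk]] := ex_third j k.
  have [c cK fc] := surjf (tperm k l).
  have kj : k != j by rewrite eq_sym.
  have : c \in S j by rewrite inE cK fc (tpermD kj lj) eqxx.
  by rewrite e inE cK fc tpermL => /andP[_ /eqP lk']; move: lk; rewrite lk' eqxx.
have Sn1 j : ~~ (S j \subset [1]).
  have [k /andP[kj _]] := ex_third j j; have [l /andP[lj lk]] := ex_third j k.
  have [c cK fc] := surjf (tperm k l).
  apply/negP => e; have : c \in S j by rewrite inE cK fc (tpermD kj lj) eqxx.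
  move/(subsetP e); rewrite inE => /eqP c1; move: fc; rewrite c1 morph1 => /(congr1 (fun p : 'S_4 => p k)).
  by rewrite perm1 tpermL => e'; move: lk; rewrite e' eqxx.
have SKt j k : S j != S k :^ t.
  apply/eqP => e; apply: (negP (Sn1 j)); rewrite -tiK subsetI sSK e.
  by rewrite conjSg sSK.
have L1' a b j : a \in K -> b \in K :^ t -> S j :^ (a * b) = S (f a j).
  move=> aK bKt; rewrite conjsgM SJ //; apply/normP.
  exact: (subsetP (cent_sub _)) _ (subsetP (centS (sSK _)) b (subsetP cKKt b bKt)).
have L1 g j : g \in Gxy -> exists j', S j :^ g = S j'.
  rewrite -defGxy => /mulsgP[a b aK bKt ->]; exists (f a j); exact: L1'.
pose decu (u : 'I_4 + 'I_4) := match u with inl j => S j | inr j => S j :^ t end.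
pose dec (i : 'I_8) := decu (@split 4 4 i).
have decuinj : injective decu.
  case=> j [] k /=.
  - by move/Sinj->.
  - by move/eqP; rewrite (negPf (SKt _ _)).
  - by move/esym/eqP; rewrite (negPf (SKt _ _)).
  - by move/conjsg_inj/Sinj->.
have decinj : injective dec.
  by move=> i i' /decuinj; apply: (can_inj (@splitK 4 4)).
have closu g u : g \in Ge ->
    exists u', decu u :^ g = decu u' /\ isl u' = (isl u == (g \in Gxy)).
  move=> gGe; case gG: (g \in Gxy).
    case: u => j /=.
      by have [j' e] := L1 g j gG; exists (inl j'); rewrite e.
    have gG' : g ^ t^-1 \in Gxy by rewrite memJ_norm.
    have [j' e] := L1 _ j gG'; exists (inr j'); split => //=.
    by rewrite -e -!conjsgM conjgE invgK mulgA mulgKV.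
  have h := cosetP g gGe (negbT gG).
  have eg : g = (g * t^-1) * t by rewrite mulgKV.
  case: u => j /=.
    have [j' e] := L1 _ j h; exists (inr j'); split => //=.
    by rewrite eg conjsgM e.
  have mG : t * g \in Gxy.
    have -> : t * g = (g * t^-1) ^ t^-1 * (t * t).
      by rewrite conjgE invgK !mulgA !mulgKV.
    by rewrite groupM // memJ_norm.
  have [j' e] := L1 _ j mG; exists (inl j'); split => //=.
  by rewrite -conjsgM e.
have clos g i : g \in Ge ->
    exists i', dec i :^ g = dec i' /\ (i' < 4) = ((i < 4) == (g \in Gxy)).
  move=> gGe; have [u' [e1 e2]] := closu g (@split 4 4 i) gGe.
  exists (@unsplit 4 4 u'); rewrite /dec unsplitK unsplit_lt e2 isl_split; by split.
pose to (i : 'I_8) (g : gT) : 'I_8 :=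
  if g \in Ge then odflt i [pick i' | dec i' == dec i :^ g] else i.
have toE i g : g \in Ge ->
    dec (to i g) = dec i :^ g /\ ((to i g < 4) = ((i < 4) == (g \in Gxy))).
  move=> gGe; have [i' [e1 e2]] := clos g i gGe.
  suff -> : to i g = i' by [].
  rewrite /to gGe; case: pickP => [i'' /eqP e3 | /(_ i') /=]; last by rewrite e1 eqxx.
  by apply: decinj; rewrite e3 e1.
have toA : is_action Ge to.
  split.
    move=> g i j /= e; case gGe: (g \in Ge); last by move: e; rewrite /to gGe.
    apply: decinj; apply: (@conjsg_inj _ g).
    by rewrite -(toE i g gGe).1 -(toE j g gGe).1 e.
  move=> i a b aGe bGe /=; apply: decinj.
  by rewrite (toE _ _ (groupM aGe bGe)).1 (toE _ _ bGe).1 (toE _ _ aGe).1 conjsgM.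
pose A := @Action _ Ge _ to toA.
pose phi := actperm A.
have phiE g i : phi g i = to i g := actpermE A g i.
have fix1 a : a \in K -> (forall j, S j :^ a = S j) -> a = 1.
  move=> aK h; apply/eqP; rewrite -(morph_injm_eq1 injf aK); apply/eqP/permP => j.
  by rewrite perm1; apply: Sinj; rewrite -SJ // h.
have injphi : 'injm phi.
  apply/subsetP => g /morphpreP[gGe /set1P phig1].
  have phig1' : actperm A g = 1 := phig1.
  have fixg i : to i g = i by rewrite -phiE /phi phig1' perm1.
  have gG : g \in Gxy.
    by have := (toE ord0 g gGe).2; rewrite fixg.
  have fixS j : S j :^ g = S j.
    have := (toE (@unsplit 4 4 (inl j)) g gGe).1.
    by rewrite fixg /dec unsplitK.
  have fixSt j : (S j :^ t) :^ g = S j :^ t.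
    have := (toE (@unsplit 4 4 (inr j)) g gGe).1.
    by rewrite fixg /dec unsplitK.
  move: gG fixS fixSt; rewrite -defGxy => /mulsgP[a b aK bKt ->] fixS fixSt.
  have a1 : a = 1.
    by apply: fix1 => // j; rewrite -{2}(fixS j) L1' ?SJ.
  move: bKt fixSt; rewrite a1 mul1g mem_conjg => cK fixSt.
  have c1 : b ^ t^-1 = 1.
    apply: fix1 => // j; apply: (@conjsg_inj _ t); rewrite -conjsgM.
    by rewrite conjgE invgK mulgA mulgKV conjsgM fixSt.
  by rewrite inE; apply/eqP; move/eqP: c1; rewrite conjg_eq1 => /eqP.
suff e : phi @* Ge = S4_wr_C2 by rewrite -e; apply: sub_isog.
apply/eqP; rewrite eqEcard; apply/andP; split; last first.
  rewrite (card_injm injphi) // -(Lagrange sGxyGe) iGe cGxy.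
  exact: card_W.
apply/subsetP => p /morphimP[g _ gGe ->]; rewrite inE.
have img : forall x, x \in wr_block -> (actperm A g x < 4) = (g \in Gxy).
  by move=> x; rewrite inE => x4; rewrite /= actpermE (toE x g gGe).2 x4.
case gG: (g \in Gxy); [apply/orP; left | apply/orP; right];
  rewrite eqEcard card_imset ?cB ?cCB //; try exact: perm_inj; rewrite andbT;
  apply/subsetP => y /imsetP[x xB ->]; rewrite /= !inE img // gG //.
Qed.

Lemma ti_cent (gT : finGroupType) (A B : {group gT}) :
  A \subset 'N(B) -> B \subset 'N(A) -> A :&: B = 1 -> B \subset 'C(A).
Proof.
move=> nBA nAB ti; rewrite centsC; apply/commG1P/trivgP; rewrite -ti.
by apply: commg_subI; rewrite subsetI subxx.
Qed.

Theorem mainTheorem13 (gT : finGroupType) (Gx Ge Gxy : {group gT}) (t : gT) :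
  amalgam_of_degree Gx Ge Gxy 5 2 ->
  primitive_amalgam Gx Ge Gxy ->
  (* t swaps x and y, so G_y = Gx :^ t *)
  t \in Ge :\: Gxy ->
  (* G_xy^{[1]} = G_x^{[1]} :&: G_y^{[1]} = 1 *)
  vertex_kernel Gx Gxy :&: vertex_kernel (Gx :^ t) Gxy = 1 ->
  (Gx / vertex_kernel Gx Gxy) \isog Sym_n 5 ->
  vertex_kernel Gx Gxy \isog Sym_n 4 ->
  Gx \isog setX (Sym_n 5) (Sym_n 4) /\ Ge \isog S4_wr_C2.
Proof.
case=> defGxy iGx iGe _ htG hti hQ hK.
have tGe : t \in Ge by case/setDP: htG.
have sGxyGx : Gxy \subset Gx by rewrite defGxy subsetIl.
have sGxyGe : Gxy \subset Ge by rewrite defGxy subsetIr.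
have nGxy : Gxy <| Ge := index2_normal sGxyGe iGe.
have Gxyt : Gxy :^ t = Gxy := normP (subsetP (normal_norm nGxy) t tGe).
pose K := gcore_group Gxy Gx.
have eK : vertex_kernel Gx Gxy = K := erefl.
have eKt : vertex_kernel (Gx :^ t) Gxy = K :^ t := gcore_conj Gx Gxyt.
rewrite eK eKt in hti; rewrite eK in hQ hK.
have sKGxy : K \subset Gxy := gcore_sub Gxy Gx.
have nKGx : K <| Gx by rewrite /normal (subset_trans sKGxy sGxyGx) gcore_norm.
have sKtGxy : K :^ t \subset Gxy by rewrite -Gxyt conjSg.
have nKGxy : K <| Gxy := normalS sKGxy sGxyGx nKGx.
have nKtGxy : K :^ t <| Gxy by have := nKGxy; rewrite -(normalJ _ _ t) Gxyt.
have cK : #|K| = 24 by rewrite (card_isog hK) /Sym_n cardsT card_Sn.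
have cGx : #|Gx| = 2880.
  have := card_isog hQ; rewrite /Sym_n cardsT card_Sn card_quotient ?normal_norm //.
  by move=> h; rewrite -(Lagrange (normal_sub nKGx)) h cK.
have cGxy : #|Gxy| = 576.
  have := Lagrange sGxyGx; rewrite iGx cGx; lia.
have cKt : K :^ t \subset 'C(K).
  apply: ti_cent => //; [exact: subset_trans sKGxy (normal_norm nKtGxy)|].
  exact: subset_trans sKtGxy (normal_norm nKGxy).
have defKK : K * K :^ t = Gxy.
  apply/eqP; rewrite eqEcard mul_subG //=.
  have := mul_cardG K (K :^ t)%G; rewrite /= hti cards1 muln1 cardJg cK => <-.
  by rewrite cGxy.
split.
  exact: (Gx_part nKGx sGxyGx defKK sKtGxy nKtGxy hti cK cGxy iGx (erefl _) hQ hK).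
exact: (Ge_part sGxyGe iGe htG defKK cKt hti cGxy hK).
Qed.
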